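(* Let $(X,E,\ell)$ be a strongly connected edge-labelled directed graph with label alphabet $\Sigma$, equipped with transition probabilities $p(e)\ge\alpha>0$ for all $e\in E$ (for a constant $\alpha$) satisfying $\sum_{e:\,e^-=x}p(e)\le1$ for every $x\in X$. Let $F\subset\Sigma^+$ be a finite, non-empty set which is relatively dense in $(X,E,\ell)$. Then there exist $k\in\mathbb N$ and $\varepsilon_0>0$ such that $$\sum_{y\in X}p_F^{(k)}(x,y)\le1-\varepsilon_0\quad\text{for all }x\in X.$$
   Context: $\Sigma$ is a finite alphabet, $\Sigma^+$ the set of non-empty finite words. $(X,E,\ell)$ is a directed graph whose edges $e=(x,a,y)$ have initial vertex $e^-=x$, terminal vertex $e^+=y$ and label $\ell(e)=a\in\Sigma$ (two edges with the same endpoints have distinct labels). A path $\pi=e_1\cdots e_n$ has $e_i^+=e_{i+1}^-$, length $n$ and label $\ell(\pi)=\ell(e_1)\cdots\ell(e_n)$. Strongly connected: for any $x,y$ there is a path from $x$ to $y$. $d^+(x,y)$ is the minimal length of a path from $x$ to $y$. $F$ is relatively dense if there is $D$ such that for each $x$ there are $y$ and $w\in F$ with $d^+(x,y)\le D$ and a path starting at $y$ with label $w$. For a path $\pi=e_1\cdots e_n$ let $\mathbb P(\pi)=\prod_i p(e_i)$. Then $p_F^{(n)}(x,y)=\sum\mathbb P(\pi)$, the sum over all paths $\pi$ of length $n$ from $x$ to $y$ whose label contains no element of $F$ as a factor (contiguous subword); this is the probability that the Markov chain (with possible killing) on $X$ moving along edges with probabilities $p(e)$ goes from $x$ to $y$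 in $n$ steps without traversing in consecutive steps a path with label in $F$. *)

(* Defs.v *)
From mathcomp Require Import all_boot all_order all_algebra.
From mathcomp Require Import reals.
Set Implicit Arguments. Unset Strict Implicit. Unset Printing Implicit Defensive.
Import Order.TTheory GRing.Theory Num.Theory.
Local Open Scope ring_scope.

(* An edge-labelled directed graph (X,E,l) with label alphabet Sigma is given by
   its (finite, duplicate-free) lists of outgoing edges: the edge (x,a,y) is in E
   iff (a,y) \in out x.  Distinct edges with the same endpoints thus have distinct
   labels.  A path from x is a sequence of steps (a_i, x_i) of edges
   (x_{i-1},a_i,x_i) with x_0 = x. *)

Section Graph.
Variables (Sigma : finType) (X : eqType) (out : X -> seq (Sigma * X)).

Definition is_edge (x : X) (a : Sigma) (y : X) : bool := (a, y) \in out x.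

Fixpoint paths (x : X) (n : nat) : seq (seq (Sigma * X)) :=
  match n with
  | 0 => [:: [::]]
  | n'.+1 => flatten [seq [seq e :: q | q <- paths e.2 n'] | e <- out x]
  end.

Definition path_end (x : X) (pi : seq (Sigma * X)) : X := last x (map snd pi).
Definition path_label (pi : seq (Sigma * X)) : seq Sigma := map fst pi.

Definition reach (x y : X) (n : nat) : Prop :=
  exists2 pi, pi \in paths x n & path_end x pi = y.

Definition strongly_connected : Prop := forall x y : X, exists n, reach x y n.

Definition dplus_le (x y : X) (D : nat) : Prop := exists2 n, (n <= D)%N & reach x y n.

Definition has_path_label (y : X) (w : seq Sigma) : Prop :=
  exists2 pi, pi \in paths y (size w) & path_label pi = w.

Definition relatively_dense (F : seq (seq Sigma)) : Prop :=
  exists D : nat, forall x : X, exists y : X, exists2 w : seq Sigma,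
    w \in F & dplus_le x y D /\ has_path_label y w.

Variable R : realType.
Variable p : X -> Sigma -> X -> R.

Fixpoint path_prob (x : X) (pi : seq (Sigma * X)) : R :=
  match pi with
  | [::] => 1
  | e :: q => p x e.1 e.2 * path_prob e.2 q
  end.

Definition avoids (F : seq (seq Sigma)) (pi : seq (Sigma * X)) : bool :=
  all (fun w => ~~ infix w (path_label pi)) F.

Definition pF (F : seq (seq Sigma)) (n : nat) (x y : X) : R :=
  \sum_(pi <- paths x n | avoids F pi && (path_end x pi == y)) path_prob x pi.

(* \sum_{y in X} p_F^{(n)}(x,y): the summand vanishes outside the finite set of
   endpoints of length-n paths from x, so the sum is over that set. *)
Definition pF_total (F : seq (seq Sigma)) (n : nat) (x : X) : R :=
  \sum_(y <- undup [seq path_end x pi | pi <- paths x n]) pF F n x y.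

End Graph.

(* Main.v *)
Require Import Defs.
From mathcomp Require Import all_boot all_order all_algebra.
From mathcomp Require Import reals.
Import Order.TTheory GRing.Theory Num.Theory.
Local Open Scope ring_scope.

Section Helpers.
Variables (Sigma : finType) (X : eqType) (out : X -> seq (Sigma * X)).
Variables (R : realType) (p : X -> Sigma -> X -> R).
Hypothesis p_ge0 : forall x e, e \in out x -> 0 <= p x e.1 e.2.
Hypothesis p_sum : forall x, \sum_(e <- out x) p x e.1 e.2 <= 1.

Lemma paths_S x n :
  paths out x n.+1 = flatten [seq [seq e :: q | q <- paths out e.2 n] | e <- out x].
Proof. by []. Qed.

Lemma sum_pathsS x n (Q : pred (seq (Sigma * X))) :
  \sum_(pi <- paths out x n.+1 | Q pi) path_prob p x pi =
  \sum_(e <- out x) p x e.1 e.2 *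
     \sum_(q <- paths out e.2 n | Q (e :: q)) path_prob p e.2 q.
Proof.
rewrite paths_S big_flatten /= big_map; apply: eq_bigr => e _.
by rewrite big_map mulr_sumr; apply: eq_bigr.
Qed.

Lemma prob_ge0 x n pi : pi \in paths out x n -> 0 <= path_prob p x pi.
Proof.
elim: n x pi => [|n IH] x pi /=.
  by rewrite inE => /eqP ->.
case/flatten_mapP => e he /mapP [q hq ->] /=.
by rewrite mulr_ge0 ?p_ge0 ?(IH _ _ hq).
Qed.

Lemma total_le1 x n : \sum_(pi <- paths out x n) path_prob p x pi <= 1.
Proof.
elim: n x => [|n IH] x; first by rewrite /= big_seq1.
rewrite (sum_pathsS x n predT) /=.
apply: le_trans (p_sum x).
rewrite big_seq_cond [X in _ <= X]big_seq_cond.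
apply: ler_sum => e /andP [he _].
by rewrite ler_piMr ?p_ge0.
Qed.

Lemma prefix_bound m j x (Q : pred (seq (Sigma * X))) :
  \sum_(pi <- paths out x (m + j) | Q (take m pi)) path_prob p x pi <=
  \sum_(pi <- paths out x m | Q pi) path_prob p x pi.
Proof.
elim: m x Q => [|m IH] x Q.
  rewrite add0n /= big_cons big_nil addr0 /=.
  under eq_bigl => pi do rewrite take0.
  case: (Q [::]).
    exact: total_le1.
  by rewrite big_pred0.
rewrite addSn (sum_pathsS x (m + j) (fun pi => Q (take m.+1 pi))) sum_pathsS.
rewrite big_seq_cond [X in _ <= X]big_seq_cond.
apply: ler_sum => e /andP [he _].
apply: ler_wpM2l; first exact: p_ge0.
exact: (IH e.2 (fun q => Q (e :: q))).
Qed.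

Variable beta : R.
Hypothesis beta_ge0 : 0 <= beta.
Hypothesis beta_le : forall x e, e \in out x -> beta <= p x e.1 e.2.

Lemma prob_ge_beta x n pi : pi \in paths out x n -> beta ^+ n <= path_prob p x pi.
Proof.
elim: n x pi => [|n IH] x pi /=.
  by rewrite inE => /eqP ->; rewrite expr0.
case/flatten_mapP => e he /mapP [q hq ->] /=.
rewrite exprS ler_pM ?exprn_ge0 ?beta_le ?(IH _ _ hq) //.
Qed.

Lemma paths_cat x n m pi1 pi2 : pi1 \in paths out x n ->
  pi2 \in paths out (path_end x pi1) m -> pi1 ++ pi2 \in paths out x (n + m).
Proof.
elim: n x pi1 => [|n IH] x pi1 /=.
  by rewrite inE => /eqP ->.
case/flatten_mapP => e he /mapP [q hq ->] /= h2.
apply/flatten_mapP; exists e => //; apply/mapP; exists (q ++ pi2) => //.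
exact: IH.
Qed.

End Helpers.

Lemma pF_total_eq (Sigma : finType) (X : eqType) (out : X -> seq (Sigma * X))
  (R : realType) (p : X -> Sigma -> X -> R) F k x :
  pF_total out p F k x =
  \sum_(pi <- paths out x k | avoids F pi) path_prob p x pi.
Proof.
rewrite /pF_total /pF.
under eq_bigr => y _ do rewrite big_mkcondr /=.
rewrite exchange_big /= [RHS]big_seq_cond [LHS]big_seq_cond.
apply: eq_bigr => pi /andP [hpi hA].
rewrite -big_mkcond -big_filter.
rewrite (@eq_filter _ _ (pred1 (path_end x pi))); last by move=> y; rewrite /= eq_sym.
rewrite filter_pred1_uniq ?undup_uniq ?big_seq1 // mem_undup.
exact: map_f.
Qed.

Lemma sum_sub_pred (T : eqType) (R : realType) (r : seq T) (P Q : pred T) (f : T -> R) :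
  (forall i, i \in r -> 0 <= f i) -> (forall i, i \in r -> P i -> Q i) ->
  \sum_(i <- r | P i) f i <= \sum_(i <- r | Q i) f i.
Proof.
move=> h0 hPQ; rewrite big_mkcond [X in _ <= X]big_mkcond big_seq [X in _ <= X]big_seq.
apply: ler_sum => i hi; case hP: (P i); first by rewrite (hPQ i hi hP).
by case: (Q i); rewrite ?h0.
Qed.

Theorem mainTheorem15 (Sigma : finType) (X : eqType)
  (out : X -> seq (Sigma * X)) (R : realType) (p : X -> Sigma -> X -> R)
  (alpha : R) (F : seq (seq Sigma)) :
  (forall x, uniq (out x)) ->
  strongly_connected out ->
  0 < alpha ->
  (forall x a y, is_edge out x a y -> alpha <= p x a y) ->
  (forall x, \sum_(e <- out x) p x e.1 e.2 <= 1) ->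
  F != [::] ->
  (forall w, w \in F -> w != [::]) ->
  relatively_dense out F ->
  exists k : nat, exists2 eps0 : R, 0 < eps0 &
    forall x : X, pF_total out p F k x <= 1 - eps0.
Proof.
move=> _ _ alpha_gt0 hp hsum _ _ [D hD].
have pal : forall x e, e \in out x -> alpha <= p x e.1 e.2.
  by move=> x [a y] he; apply: hp.
have p_ge0 : forall x e, e \in out x -> 0 <= p x e.1 e.2.
  by move=> x e he; apply: le_trans (pal x e he); apply: ltW.
set beta := Num.min alpha 1.
have beta_gt0 : 0 < beta by rewrite lt_min alpha_gt0 ltr01.
have beta_le1 : beta <= 1 by rewrite ge_min lexx orbT.
have beta_le : forall x e, e \in out x -> beta <= p x e.1 e.2.
  by move=> x e he; apply: le_trans (pal x e he); rewrite ge_min lexx.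
set L := \max_(w <- F) size w.
exists (D + L)%N; exists (beta ^+ (D + L)); first exact: exprn_gt0.
move=> x.
have [y [w wF [[n hn [pi1 hpi1 hend]] [pi2 hpi2 hlab]]]] := hD x.
rewrite -hend in hpi2.
have hpi0 := @paths_cat _ _ out _ _ _ _ _ hpi1 hpi2.
set m := (n + size w)%N.
have hm : (m <= D + L)%N.
  by rewrite leq_add //; exact: (@leq_bigmax_seq _ F predT (fun w : seq Sigma => size w) w wF).
rewrite pF_total_eq.
set Q := fun pi : seq (Sigma * X) => ~~ infix w (path_label pi).
apply: (@le_trans _ _ (\sum_(pi <- paths out x (m + (D + L - m)) | Q (take m pi)) path_prob p x pi)).
  rewrite subnKC //; apply: sum_sub_pred.
    by move=> i hi; apply: prob_ge0 hi.
  move=> pi _ /allP hav; rewrite /Q; apply/negP => hinf.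
  move/negP: (hav w wF); apply.
  apply: infix_trans hinf _; rewrite /path_label map_take; exact: infix_take.
apply: le_trans (@prefix_bound _ _ out _ p p_ge0 hsum m (D + L - m) x Q) _.
have htot := @total_le1 _ _ out _ p p_ge0 hsum x m.
rewrite (bigID Q) /= in htot.
have hbad : path_prob p x (pi1 ++ pi2) <=
    \sum_(pi <- paths out x m | ~~ Q pi) path_prob p x pi.
  rewrite (big_rem _ hpi0) /Q negbK /path_label map_cat.
  rewrite -/(path_label pi2) hlab suffix_infix lerDl.
  rewrite big_seq_cond; apply: sumr_ge0 => i /andP [hi _].
  by apply: prob_ge0 (mem_rem hi).
have hb := @prob_ge_beta _ _ out _ p _ (ltW beta_gt0) beta_le x _ _ hpi0.
have hk : beta ^+ (D + L) <= beta ^+ m by apply: ler_wiXn2l => //; exact: ltW.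
rewrite lerBrDr; apply: le_trans htot.
by rewrite lerD2l (le_trans hk (le_trans hb hbad)).
Qed.
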